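(* Let $L=\langle S,A,\to\rangle$ be a labelled transition system. If Duplicator wins a configuration $\langle (s,t),\dagger,\dagger,*\rangle_S$ in the $\emptyset$-generic bisimulation game on $L$, she has an eager winning strategy from this configuration.
   Context: An LTS is $\langle S,A,\to\rangle$ with states $S$, actions $A$ containing the internal action $\tau$, and $\to\subseteq S\times A\times S$; write $s\xrightarrow{a}t$. $\emptyset$-generic bisimulation game: with formal tags $\frown,\smile$, Spoiler-owned configurations $\langle (s,t),c,m,r\rangle_S$ and Duplicator-owned $\langle (s,t),c,m,r\rangle_D$ with $(s,t)\in S\times S$, $c\in (A\times S)\cup\{\dagger\}$, $m\in (S\times\{\frown,\smile\})\cup\{\dagger\}$, $r\in\{*,\checkmark\}$. Spoiler from $\langle (s,t),c,m,r\rangle_S$ may: (S1) move to $\langle (s,t),c,m,*\rangle_D$ if $c\neq\dagger$; (S2a) for some $s\xrightarrow{a}s'$, move to $\langle (s,t),(a,s'),(t,\frown),*\rangle_D$ if $c=\dagger$; (S2b) for some $s\xrightarrow{a}s'$, move to $\langle (s,t),(a,s'),(t,\frown),\checkmark\rangle_D$ if $c\neq (a,s')$; (S3) for some $t\xrightarrow{a}t'$, move to $\langle (t,s),(a,t'),(s,\frown),\checkmark\rangle_D$. Duplicator from $\langle (u,v),(a,u'),(\bar v,f),r\rangle_D$ may: (D1) move to $\langle (u',\bar v),\dagger,\dagger,\checkmark\rangle_S$ if $a=\tau$; (D2) if $f=\frown$ and $\bar v\xrightarrow{a}v'$: (a) move to $\langle (u',v'),(a,u'),(v',\smile),*\rangle_S$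 or (b) move to $\langle (u',v'),\dagger,\dagger,\checkmark\rangle_S$; (D3) for some $\bar v\xrightarrow{\tau}v'$: (a) move to $\langle (u,v'),(a,u'),(v',f),*\rangle_S$, or (b) only if $f=\smile$, move to $\langle (u',v'),\dagger,\dagger,\checkmark\rangle_S$. Duplicator wins a finite play if Spoiler gets stuck, and an infinite play if it has infinitely many $\checkmark$ rewards; other plays are won by Spoiler. A strategy of Duplicator is winning from a configuration if all plays from it consistent with the strategy are won by her. A strategy of Duplicator is eager if it never uses move (D2)(a). *)

(* Defs.v *)
From Stdlib Require Import List.
Import ListNotations.

Set Implicit Arguments.

Inductive tag := Frown | Smile.
Inductive reward := Star | Check.

Section Game.
Context {St A : Type} (tau : A) (step : St -> A -> St -> Prop).

(* Configurations: dagger is rendered as None.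
   CS = Spoiler-owned <(s,t),c,m,r>_S, CD = Duplicator-owned <(s,t),c,m,r>_D. *)
Inductive conf :=
| CS : St * St -> option (A * St) -> option (St * tag) -> reward -> conf
| CD : St * St -> option (A * St) -> option (St * tag) -> reward -> conf.

Definition rew (x : conf) : reward :=
  match x with CS _ _ _ r => r | CD _ _ _ r => r end.

Definition is_spoiler (x : conf) : Prop :=
  match x with CS _ _ _ _ => True | CD _ _ _ _ => False end.
Definition is_dup (x : conf) : Prop :=
  match x with CS _ _ _ _ => False | CD _ _ _ _ => True end.

Inductive smove : conf -> conf -> Prop :=
| S1 : forall s t c m r, c <> None ->
    smove (CS (s,t) c m r) (CD (s,t) c m Star)
| S2a : forall s t m r a s', step s a s' ->
    smove (CS (s,t) None m r) (CD (s,t) (Some (a,s')) (Some (t,Frown)) Star)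
| S2b : forall s t c m r a s', step s a s' -> c <> Some (a,s') ->
    smove (CS (s,t) c m r) (CD (s,t) (Some (a,s')) (Some (t,Frown)) Check)
| S3 : forall s t c m r a t', step t a t' ->
    smove (CS (s,t) c m r) (CD (t,s) (Some (a,t')) (Some (s,Frown)) Check).

(* Duplicator's move (D2)(a), singled out for the notion of eagerness. *)
Inductive d2a : conf -> conf -> Prop :=
| D2a : forall u v a u' vb r v', step vb a v' ->
    d2a (CD (u,v) (Some (a,u')) (Some (vb,Frown)) r)
        (CS (u',v') (Some (a,u')) (Some (v',Smile)) Star).

Inductive dmove : conf -> conf -> Prop :=
| D1 : forall u v a u' vb f r, a = tau ->
    dmove (CD (u,v) (Some (a,u')) (Some (vb,f)) r) (CS (u',vb) None None Check)
| D2a_move : forall x y, d2a x y -> dmove x y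
| D2b : forall u v a u' vb r v', step vb a v' ->
    dmove (CD (u,v) (Some (a,u')) (Some (vb,Frown)) r) (CS (u',v') None None Check)
| D3a : forall u v a u' vb f r v', step vb tau v' ->
    dmove (CD (u,v) (Some (a,u')) (Some (vb,f)) r)
          (CS (u,v') (Some (a,u')) (Some (v',f)) Star)
| D3b : forall u v a u' vb r v', step vb tau v' ->
    dmove (CD (u,v) (Some (a,u')) (Some (vb,Smile)) r) (CS (u',v') None None Check).

Definition move (x y : conf) : Prop :=
  match x with CS _ _ _ _ => smove x y | CD _ _ _ _ => dmove x y end.

Definition stuck (x : conf) : Prop := ~ exists y, move x y.

(* A (history-dependent) strategy of Duplicator: given the history of the play
   so far (most recent configuration first), the next configuration. *)
Definition dstrat := list conf -> conf.

Fixpoint hist (p : nat -> conf) (n : nat) : list conf :=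
  match n with 0 => [p 0] | S k => p (S k) :: hist p k end.

Definition path_upto (p : nat -> conf) (n : nat) : Prop :=
  forall i, i < n -> move (p i) (p (S i)).

Definition consistent_upto (sigma : dstrat) (p : nat -> conf) (n : nat) : Prop :=
  forall i, i < n -> is_dup (p i) -> p (S i) = sigma (hist p i).

(* sigma is a winning strategy of Duplicator from x0:
   (1) at every reachable Duplicator configuration where she can move, sigma
       prescribes a legal move (sigma is a genuine strategy);
   (2) every finite (maximal) play from x0 consistent with sigma ends in a
       configuration where Spoiler is stuck;
   (3) every infinite play from x0 consistent with sigma visits infinitely
       many configurations with reward checkmark. *)
Definition dwinning_from (sigma : dstrat) (x0 : conf) : Prop :=
  (forall p n, p 0 = x0 -> path_upto p n -> consistent_upto sigma p n ->
     is_dup (p n) -> (exists y, dmove (p n) y) -> dmove (p n) (sigma (hist p n)))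
  /\ (forall p n, p 0 = x0 -> path_upto p n -> consistent_upto sigma p n ->
     stuck (p n) -> is_spoiler (p n))
  /\ (forall p, p 0 = x0 -> (forall i, move (p i) (p (S i))) ->
     (forall i, is_dup (p i) -> p (S i) = sigma (hist p i)) ->
     forall N, exists i, N <= i /\ rew (p i) = Check).

Definition dwins (x0 : conf) : Prop := exists sigma, dwinning_from sigma x0.

Definition eager (sigma : dstrat) : Prop :=
  forall x h, ~ d2a x (sigma (x :: h)).

End Game.

(* Main.v *)
Require Import Defs.
From Stdlib Require Import List ClassicalEpsilon Classical Lia Arith PeanoNat.
Import ListNotations.

Inductive mode := M0 | M1 | M2 | M3.

Section Sim.
Context {St A : Type} (tau : A) (step : St -> A -> St -> Prop) (sigma : @dstrat St A).

Notation cf := (@conf St A).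

Definition dec (P : Prop) : {P} + {~P} := excluded_middle_informative P.

Definition setrew (r : reward) (x : cf) : cf :=
  match x with CS a b c _ => CS a b c r | CD a b c _ => CD a b c r end.

Definition tagset (f : tag) (m : option (St * tag)) :=
  match m with Some (v, _) => Some (v, f) | None => None end.

Definition s1t (x : cf) : cf :=
  match x with CS p c m _ => CD p c m Star | _ => x end.

Definition is_d2a_shape (x y : cf) : bool :=
  match x, y with
  | CD _ _ (Some (_, Frown)) _, CS _ _ (Some (_, Smile)) _ => true
  | _, _ => false end.

Definition fix_eager (x y : cf) : cf :=
  if is_d2a_shape x y then
    match y with CS q _ _ _ => CS q None None Check | _ => y end
  else y.

Definition sstep (m : mode) (o n n' : cf) : cf * mode :=
  match m with
  | M0 => (n', M0)
  | M1 => match o with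
          | CS p c mm _ =>
              if dec (exists r, n' = CD p c (tagset Frown mm) r)
              then (CD p c mm Star, M2) else (setrew Check n', M0)
          | _ => (n', M0) end
  | M2 => if dec (n' = s1t n) then (s1t o, M2) else (n', M0)
  | M3 => (setrew Check n', M0)
  end.

Definition dstep (m : mode) (o so : cf) : cf * mode :=
  match m with
  | M0 => if is_d2a_shape o so then
            (match so with CS q _ _ _ => CS q None None Check | _ => so end, M1)
          else (so, M0)
  | M2 => match o with
          | CD (u, v) (Some (a, u')) _ _ =>
              if dec (a = tau /\ so = CS (u', v) None None Check) then (so, M0)
              else match so with
                   | CS q None None _ => (CS q (Some (a, u')) (Some (snd q, Frown)) Star, M3)
                   | CS q c' mm' r' => (CS q c' (tagset Frown mm') r', M2)
                   | _ => (so, M0) end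
          | _ => (so, M0) end
  | _ => (so, M0)
  end.

Fixpoint tr (l : list cf) : list cf * mode :=
  match l with
  | [] => ([], M0)
  | x :: h =>
    match h with
    | [] => ([x], M0)
    | y :: _ =>
      let r := tr h in
      let oh := fst r in let m := snd r in let o := hd y oh in
      match y with
      | CS _ _ _ _ => (fst (sstep m o y x) :: oh, snd (sstep m o y x))
      | CD _ _ _ _ => (sigma oh :: oh, snd (dstep m o (sigma oh)))
      end
    end
  end.

Definition sigma' (l : list cf) : cf :=
  match l with
  | [] => sigma []
  | x :: _ => let r := tr l in fix_eager x (fst (dstep (snd r) (hd x (fst r)) (sigma (fst r))))
  end.

Definition Inv (m : mode) (n o : cf) : Prop :=
  match m with
  | M0 => setrew Star n = setrew Star o
  | M1 => exists u v a, n = CS (u,v) None None Check /\ o = CS (u,v) (Some (a,u)) (Some (v,Smile)) Star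
  | M2 => exists u v a, step u a u /\
      ((n = CS (u,v) (Some (a,u)) (Some (v,Frown)) Star /\ o = CS (u,v) (Some (a,u)) (Some (v,Smile)) Star)
       \/ (exists r, n = CD (u,v) (Some (a,u)) (Some (v,Frown)) r /\ o = CD (u,v) (Some (a,u)) (Some (v,Smile)) Star))
  | M3 => exists u v a, step u a u /\ n = CS (u,v) (Some (a,u)) (Some (v,Frown)) Star /\ o = CS (u,v) None None Check
  end.

Definition Good (m : mode) (m' : mode) (n' o' : cf) : Prop :=
  Inv m' n' o' /\ (rew o' = Check -> rew n' = Check \/ m = M1 \/ m = M3 \/ m' = M3)
  /\ (m = M0 -> m' = M0 \/ m' = M1) /\ (m = M3 -> m' = M0).

Ltac fin := repeat split; intros; simpl in *; try discriminate; auto.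

Lemma smove_strip x x' y : smove step x y -> setrew Star x = setrew Star x' -> smove step x' y.
Proof.
  intros H E; destruct x' as [p c m r|p c m r]; inversion H; subst; simpl in E; try discriminate;
  injection E; intros; subst; econstructor; eauto.
Qed.

Lemma dmove_strip x x' y : dmove tau step x y -> setrew Star x = setrew Star x' -> dmove tau step x' y.
Proof.
  intros H E; destruct x' as [p c m r|p c m r]; inversion H; subst;
  try match goal with Hd : d2a _ _ _ |- _ => inversion Hd; subst end;
  simpl in E; try discriminate;
  injection E; intros; subst; try (econstructor; eauto; fail).
  apply D2a_move. constructor. auto.
Qed.

Lemma step_s m n o n' : Inv m n o -> smove step n n' ->
  smove step o (fst (sstep m o n n')) /\ Good m (snd (sstep m o n n')) n' (fst (sstep m o n n')).
Proof.
  intros I H. destruct m; simpl in I.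
  - simpl. split. eapply smove_strip; eauto. repeat split; auto; intros; try discriminate.
  - destruct I as (u & v & a & -> & ->). simpl.
    destruct (dec _) as [[r E]|NE].
    + split. constructor; discriminate.
      split. simpl. subst n'. inversion H; subst; try discriminate.
      * exists u, v, a. split; auto. right; eauto.
      * exists u, v, a. split; auto. right; eauto.
      * exists u, u, a. split; auto. right; eauto.
      * repeat split; intros; try discriminate.
    + inversion H; subst; try congruence.
      * split. apply S2b; auto. intro X; injection X; intros; subst. apply NE; eauto.
        fin.
      * split. apply S2b; auto. intro X; injection X; intros; subst. apply NE; eauto.
        fin.
      * split. apply S3; auto.
        fin.
  - destruct I as (u & v & a & Hs & [[-> ->]|(r & -> & ->)]).
    + simpl. destruct (dec _) as [E|NE].
      * split. constructor; discriminate. split. simpl. exists u, v, a. split; auto.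
        right. exists Star. rewrite E. auto.
        fin.
      * inversion H; subst; try congruence.
        -- split. apply S2b; auto. fin.
        -- split. apply S3; auto. fin.
    + inversion H.
  - destruct I as (u & v & a & Hs & -> & ->). simpl.
    inversion H; subst.
    + split. simpl. apply S2b; auto; discriminate. fin.
    + split. simpl. apply S2b; auto; discriminate. fin.
    + split. apply S3; auto. fin.
Qed.


Lemma shape_strip x x' y : setrew Star x = setrew Star x' -> is_d2a_shape x y = is_d2a_shape x' y.
Proof. destruct x, x'; simpl; intro E; try discriminate; injection E; intros; subst; auto. Qed.

Lemma step_d m n o so : Inv m n o -> is_dup n -> dmove tau step o so ->
  dmove tau step n (fix_eager n (fst (dstep m o so))) /\
  Good m (snd (dstep m o so)) (fix_eager n (fst (dstep m o so))) so.
Proof.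
  intros I Hd H. destruct m; simpl in I.
  - simpl. destruct (is_d2a_shape o so) eqn:Sh.
    + inversion H; subst; simpl in Sh; try (destruct f; discriminate); try discriminate.
      match goal with Hd : d2a _ _ _ |- _ => inversion Hd; subst end.
      destruct n as [pp cc mm rr|pp cc mm rr]; simpl in I; try discriminate.
      injection I; intros; subst. simpl.
      split. apply D2b; auto. fin.
      exists u', v', a. auto.
    + simpl. unfold fix_eager. rewrite (shape_strip _ _ so I), Sh.
      split. eapply dmove_strip; eauto. fin.
  - destruct I as (u & v & a & -> & ->). destruct Hd.
  - destruct I as (u & v & a & Hs & [[-> ->]|(r & -> & ->)]). destruct Hd.
    simpl. inversion H; subst.
    + destruct (dec _) as [E|NE]. 2: exfalso; apply NE; auto.
      simpl. split. apply D1; auto. fin.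
    + match goal with Hd : d2a _ _ _ |- _ => inversion Hd end.
    + destruct (dec _) as [E|NE]. destruct E as [_ E]; discriminate.
      simpl. split. apply D3a; auto. fin. exists u, v', a. split; auto.
    + destruct (dec _) as [E|NE].
      * destruct E as [Ea E]. injection E; intros; subst. simpl.
        split. apply D1; auto. fin.
      * simpl. split. apply D3a; auto. fin. exists u, v', a. auto.
  - destruct I as (u & v & a & Hs & -> & ->). destruct Hd.
Qed.

Lemma fix_eager_ok x y : ~ d2a step x (fix_eager x y).
Proof.
  intro H. inversion H; subst. unfold fix_eager in *.
  destruct y as [q0 c mm r0|q0 c mm r0]; simpl in *;
  try (destruct mm as [[w [|]]|]); simpl in *; try discriminate; congruence.
Qed.

Lemma hist_head (p : nat -> cf) i : exists tl, hist p i = p i :: tl.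
Proof. destruct i; simpl; eauto. Qed.

Lemma tr_cons_S (x y : cf) h : is_spoiler y ->
  tr (x :: y :: h) = (fst (sstep (snd (tr (y::h))) (hd y (fst (tr (y::h)))) y x) :: fst (tr (y::h)),
                      snd (sstep (snd (tr (y::h))) (hd y (fst (tr (y::h)))) y x)).
Proof. destruct y; simpl; intros; [reflexivity|contradiction]. Qed.

Lemma tr_cons_D (x y : cf) h : is_dup y ->
  tr (x :: y :: h) = (sigma (fst (tr (y::h))) :: fst (tr (y::h)),
                      snd (dstep (snd (tr (y::h))) (hd y (fst (tr (y::h)))) (sigma (fst (tr (y::h)))))).
Proof. destruct y; simpl; intros; [contradiction|reflexivity]. Qed.

Definition q (p : nat -> cf) i := hd (p 0) (fst (tr (hist p i))).
Definition md (p : nat -> cf) i := snd (tr (hist p i)).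

Lemma spoiler_or_dup (x : cf) : is_spoiler x \/ is_dup x.
Proof. destruct x; simpl; auto. Qed.

Lemma hist_tr p i : fst (tr (hist p i)) = hist (q p) i.
Proof.
  induction i.
  - reflexivity.
  - change (hist p (S i)) with (p (S i) :: hist p i).
    change (hist (q p) (S i)) with (q p (S i) :: hist (q p) i).
    rewrite <- IHi. unfold q at 1.
    change (hist p (S i)) with (p (S i) :: hist p i).
    destruct (hist_head p i) as [tl E]. rewrite E.
    destruct (spoiler_or_dup (p i)) as [Hs|Hs].
    + rewrite tr_cons_S; auto.
    + rewrite tr_cons_D; auto.
Qed.

Lemma hd_hist (p : nat -> cf) d i : hd d (hist p i) = p i.
Proof. destruct (hist_head p i) as [tl E]; rewrite E; reflexivity. Qed.

Lemma q_S_s p i : is_spoiler (p i) ->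
  q p (S i) = fst (sstep (md p i) (q p i) (p i) (p (S i))) /\
  md p (S i) = snd (sstep (md p i) (q p i) (p i) (p (S i))).
Proof.
  intros Hs.
  assert (Ts : tr (hist p (S i)) = (fst (sstep (md p i) (q p i) (p i) (p (S i))) :: hist (q p) i,
                                    snd (sstep (md p i) (q p i) (p i) (p (S i))))).
  { change (hist p (S i)) with (p (S i) :: hist p i).
    pose proof (hist_tr p i) as Ht.
    destruct (hist_head p i) as [tl E]. rewrite E. rewrite tr_cons_S; auto. rewrite <- E.
    rewrite Ht, hd_hist. reflexivity. }
  split; [unfold q at 1 | unfold md at 1]; rewrite Ts; reflexivity.
Qed.

Lemma q_S_d p i : is_dup (p i) ->
  q p (S i) = sigma (hist (q p) i) /\
  md p (S i) = snd (dstep (md p i) (q p i) (sigma (hist (q p) i))).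
Proof.
  intros Hs.
  assert (Ts : tr (hist p (S i)) = (sigma (hist (q p) i) :: hist (q p) i,
                                    snd (dstep (md p i) (q p i) (sigma (hist (q p) i))))).
  { change (hist p (S i)) with (p (S i) :: hist p i).
    pose proof (hist_tr p i) as Ht.
    destruct (hist_head p i) as [tl E]. rewrite E. rewrite tr_cons_D; auto. rewrite <- E.
    rewrite Ht, hd_hist. reflexivity. }
  split; [unfold q at 1 | unfold md at 1]; rewrite Ts; reflexivity.
Qed.

Lemma sigma'_hist p i :
  sigma' (hist p i) = fix_eager (p i) (fst (dstep (md p i) (q p i) (sigma (hist (q p) i)))).
Proof.
  pose proof (hist_tr p i) as Ht.
  destruct (hist_head p i) as [tl E]. unfold sigma'. rewrite E. rewrite <- E.
  rewrite Ht, hd_hist. reflexivity.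
Qed.

Lemma md0 p : md p 0 = M0.
Proof. reflexivity. Qed.
Lemma q0 p : q p 0 = p 0.
Proof. reflexivity. Qed.

Lemma Inv_dup m n o : Inv m n o -> is_dup n -> is_dup o.
Proof.
  destruct m; simpl.
  - destruct n, o; simpl; intros E; try discriminate; auto.
  - intros (u & v & a & -> & ->); auto.
  - intros (u & v & a & _ & [[-> ->]|(r & -> & ->)]); simpl; auto.
  - intros (u & v & a & _ & -> & ->); auto.
Qed.

Lemma smove_spoiler x y : smove step x y -> is_spoiler x.
Proof. intro H; inversion H; simpl; auto. Qed.
Lemma smove_move x y : smove step x y -> move tau step x y.
Proof. intro H; inversion H; subst; simpl; auto. Qed.
Lemma dmove_move x y : dmove tau step x y -> move tau step x y.
Proof. intro H; inversion H; subst; simpl; auto. inversion H0; subst; simpl; auto. Qed.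
Lemma move_s x y : is_spoiler x -> move tau step x y -> smove step x y.
Proof. destruct x; simpl; tauto. Qed.
Lemma move_d x y : is_dup x -> move tau step x y -> dmove tau step x y.
Proof. destruct x; simpl; tauto. Qed.

Variable x0 : cf.
Hypothesis W1 : forall p n, p 0 = x0 -> path_upto tau step p n -> consistent_upto sigma p n ->
     is_dup (p n) -> (exists y, dmove tau step (p n) y) -> dmove tau step (p n) (sigma (hist p n)).
Hypothesis W2 : forall p n, p 0 = x0 -> path_upto tau step p n -> consistent_upto sigma p n ->
     stuck tau step (p n) -> is_spoiler (p n).

Lemma old_move p n : p 0 = x0 -> path_upto tau step (q p) n -> consistent_upto sigma (q p) n ->
  is_dup (q p n) -> dmove tau step (q p n) (sigma (hist (q p) n)).
Proof.
  intros H0 Hp Hc Hd. apply W1; auto.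
  destruct (classic (stuck tau step (q p n))) as [S|S].
  - apply W2 in S; auto. destruct (q p n); simpl in *; contradiction.
  - apply NNPP; intro N; apply S. intros [y Hy]. apply N. exists y. apply move_d; auto.
Qed.

Lemma sim p : p 0 = x0 -> forall n, path_upto tau step p n -> consistent_upto sigma' p n ->
  path_upto tau step (q p) n /\ consistent_upto sigma (q p) n /\ Inv (md p n) (p n) (q p n) /\
  (forall i, i < n -> Good (md p i) (md p (S i)) (p (S i)) (q p (S i))).
Proof.
  intros H0. induction n; intros Hp Hc.
  - split. intros i Hi; lia. split. intros i Hi; lia. split.
    rewrite md0, q0. reflexivity. intros i Hi; lia.
  - destruct IHn as (Hq & Hcq & HI & HG).
    + intros i Hi; apply Hp; lia.
    + intros i Hi; apply Hc; lia.
    + assert (Hm : move tau step (p n) (p (S n))) by (apply Hp; lia).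
      destruct (spoiler_or_dup (p n)) as [Hs|Hd].
      * destruct (q_S_s p n Hs) as [E1 E2].
        destruct (step_s _ _ _ (p (S n)) HI (move_s _ _ Hs Hm)) as [Ho Hg].
        rewrite <- E1, <- E2 in *.
        split. intros i Hi. destruct (Nat.eq_dec i n). subst; apply smove_move; auto. apply Hq; lia.
        split. intros i Hi Hdi. destruct (Nat.eq_dec i n). subst.
          apply smove_spoiler in Ho. destruct (q p n); simpl in *; contradiction.
          apply Hcq; auto; lia.
        split. apply Hg.
        intros i Hi. destruct (Nat.eq_dec i n). subst; auto. apply HG; lia.
      * destruct (q_S_d p n Hd) as [E1 E2].
        assert (Hqd : is_dup (q p n)) by (eapply Inv_dup; eauto).
        pose proof (old_move p n H0 Hq Hcq Hqd) as Ho.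
        destruct (step_d _ _ _ _ HI Hd Ho) as [Hn Hg].
        assert (Ep : p (S n) = sigma' (hist p n)) by (apply Hc; auto; lia).
        rewrite sigma'_hist in Ep. rewrite <- Ep, <- E1, <- E2 in *.
        split. intros i Hi. destruct (Nat.eq_dec i n). subst; apply dmove_move; auto. apply Hq; lia.
        split. intros i Hi Hdi. destruct (Nat.eq_dec i n). subst; auto.
          apply Hcq; auto; lia.
        split. apply Hg.
        intros i Hi. destruct (Nat.eq_dec i n). subst; auto. apply HG; lia.
Qed.

Lemma dup_ok p n : p 0 = x0 -> path_upto tau step p n -> consistent_upto sigma' p n ->
  is_dup (p n) -> dmove tau step (p n) (sigma' (hist p n)).
Proof.
  intros H0 Hp Hc Hd. destruct (sim p H0 n Hp Hc) as (Hq & Hcq & HI & _).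
  assert (Hqd : is_dup (q p n)) by (eapply Inv_dup; eauto).
  pose proof (old_move p n H0 Hq Hcq Hqd) as Ho.
  destruct (step_d _ _ _ _ HI Hd Ho) as [Hn _].
  rewrite sigma'_hist. auto.
Qed.

End Sim.
Lemma comb (rp rq : nat -> reward) (md : nat -> mode) :
  (forall i, rq (S i) = Check -> rp (S i) = Check \/ md i = M1 \/ md i = M3 \/ md (S i) = M3) ->
  (forall i, md i = M0 -> md (S i) = M0 \/ md (S i) = M1) ->
  (forall i, md i = M3 -> md (S i) = M0) ->
  (forall i, md i = M1 -> rp i = Check) ->
  (forall N, exists i, N <= i /\ rq i = Check) ->
  forall N, exists i, N <= i /\ rp i = Check.
Proof.
  intros R1 R3 R4 R2 Wq N. apply NNPP; intro H.
  assert (Hn : forall i, N <= i -> rp i <> Check) by (intros i Hi E; apply H; eauto).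
  assert (Hm1 : forall i, N <= i -> md i <> M1) by (intros i Hi E; apply (Hn i Hi); auto).
  destruct (Wq (S N)) as [i1 [Hi1 Hq1]].
  destruct i1 as [|i]; [lia|].
  assert (Hj : exists j, N <= j /\ md j = M3).
  { destruct (R1 i Hq1) as [X|[X|[X|X]]].
    - exfalso; apply (Hn (S i)); auto; lia.
    - exfalso; apply (Hm1 i); auto; lia.
    - exists i; split; auto; lia.
    - exists (S i); split; auto; lia. }
  destruct Hj as [j [Hj1 Hj2]].
  assert (Hk : forall k, md (S j + k) = M0).
  { induction k.
    - rewrite Nat.add_0_r. auto.
    - destruct (R3 _ IHk) as [X|X]; rewrite Nat.add_succ_r; auto.
      exfalso; apply (Hm1 (S (S j + k))); auto; lia. }
  destruct (Wq (S (S j))) as [i2 [Hi2 Hq2]].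
  destruct i2 as [|k']; [lia|].
  assert (E1 : md k' = M0) by (replace k' with (S j + (k' - S j)) by lia; apply Hk).
  assert (E2 : md (S k') = M0) by (replace (S k') with (S j + (S k' - S j)) by lia; apply Hk).
  destruct (R1 k' Hq2) as [X|[X|[X|X]]]; try congruence.
  apply (Hn (S k')); auto; lia.
Qed.

Theorem lemma5p12 (S A : Type) (tau : A) (step : S -> A -> S -> Prop) (s t : S) :
  dwins tau step (CS (s, t) None None Star) ->
  exists sigma : dstrat,
    eager step sigma /\ dwinning_from tau step sigma (CS (s, t) None None Star).
Proof.
  intros [sg [W1 [W2 W3]]].
  exists (sigma' tau sg). split.
  - intros x h Hd. simpl in Hd. eapply fix_eager_ok; eauto.
  - split; [|split].
    + intros p n H0 Hp Hc Hd _. eapply dup_ok; eauto.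
    + intros p n H0 Hp Hc Hst. destruct (spoiler_or_dup (p n)) as [X|X]; auto.
      exfalso. apply Hst. exists (sigma' tau sg (hist p n)). apply dmove_move.
      eapply dup_ok; eauto.
    + intros p H0 Hm Hc.
      assert (Hs : forall n, path_upto tau step (q tau sg p) n /\ consistent_upto sg (q tau sg p) n /\
                Inv step (md tau sg p n) (p n) (q tau sg p n) /\
                (forall i, i < n -> Good step (md tau sg p i) (md tau sg p (Datatypes.S i)) (p (Datatypes.S i)) (q tau sg p (Datatypes.S i)))).
      { intros n. eapply sim; eauto. intros i _; auto. intros i _; auto. }
      assert (Wq := W3 (q tau sg p) (eq_trans (q0 tau sg p) H0)).
      apply (comb (fun i => rew (p i)) (fun i => rew (q tau sg p i)) (md tau sg p)).
      * intros i. destruct (Hs (Datatypes.S i)) as (_ & _ & _ & G). apply G; auto.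
      * intros i. destruct (Hs (Datatypes.S i)) as (_ & _ & _ & G). apply G; auto.
      * intros i. destruct (Hs (Datatypes.S i)) as (_ & _ & _ & G). apply G; auto.
      * intros i E. destruct (Hs i) as (_ & _ & I & _). rewrite E in I.
        destruct I as (u & v & a & -> & _). reflexivity.
      * apply Wq.
        -- intros i. destruct (Hs (Datatypes.S i)) as (P & _). apply P; auto.
        -- intros i Hd. destruct (Hs (Datatypes.S i)) as (_ & C & _). apply C; auto.
Qed.
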